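(* Let $d\ge1$ and let $X\cong\mathbb{P}^d$ be the projective space of effective divisors of degree $d$ on $\mathbb{P}^1$, with the natural action of $G=PGL(2,\mathbb{C})$. For any two nonempty projective linear subspaces $V,W\subseteq X$ there exists $g\in G$ such that $V$ and $gW$ meet properly, i.e. $\dim(V\cap gW)=\max\{-1,\dim V+\dim W-d\}$.
   Context: Dimension $-1$ means empty intersection. *)

(* Defs.v *)
From HB Require Import structures.
From mathcomp Require Import all_boot all_order all_algebra.
From mathcomp Require Import Rstruct complex.
Set Implicit Arguments. Unset Strict Implicit. Unset Printing Implicit Defensive.
Import Order.TTheory GRing.Theory Num.Theory.
Local Open Scope ring_scope.

Definition CC : closedFieldType := (Rdefinitions.R)[i].

(* A binary form f(x,y) = sum_{i<=d} a_i x^i y^(d-i) of degree d over CC is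
   encoded by its coefficient row vector a : 'rV[CC]_(d.+1).
   X = P^d = P(binary forms of degree d) = effective divisors of degree d on P^1.
   A projective linear subspace of X is P(U) for a vector subspace U of
   'rV_(d.+1); U is represented as the row space of a matrix (mxalgebra). *)

(* Matrix (acting on row vectors) of the substitution
   f(x,y) |-> f(g00 x + g01 y, g10 x + g11 y), for g : 'M_2 invertible.
   Row i = coefficients of (g00 t + g01)^i (g10 t + g11)^(d-i), the
   dehomogenisation (y = 1, x = t) of the image of x^i y^(d-i). *)
Definition form_act (d : nat) (g : 'M[CC]_2) : 'M[CC]_(d.+1) :=
  \matrix_(i < d.+1, j < d.+1)
    (((g 0 0 *: 'X + (g 0 1)%:P) ^+ i * (g 1 0 *: 'X + (g 1 1)%:P) ^+ (d - i))`_j).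

(* Projective dimension of the projective subspace P(row space of A);
   -1 means empty. *)
Definition pdim (m n : nat) (A : 'M[CC]_(m, n)) : int := (\rank A)%:Z - 1.

(* Main.v *)
Require Import Defs.
From HB Require Import structures.
From mathcomp Require Import all_boot all_order all_algebra.
From mathcomp Require Import Rstruct complex.
From mathcomp Require Import ring lra zify.
Import Order.TTheory GRing.Theory Num.Theory.
Local Open Scope ring_scope.

Section Aux.
Set Implicit Arguments. Unset Strict Implicit. Unset Printing Implicit Defensive.

Definition Lf (g : 'M[CC]_2) (r : 'I_2) : {poly CC} := g r 0 *: 'X + (g r 1)%:P.

Definition Hs (m : nat) (h : 'M[CC]_2) (p : {poly CC}) : {poly CC} :=
  \sum_(j < m.+1) p`_j *: (Lf h 0 ^+ j * Lf h 1 ^+ (m - j)).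

Lemma HsD m (h : 'M[CC]_2) (p q : {poly CC}) : Hs m h (p + q) = Hs m h p + Hs m h q.
Proof. by rewrite /Hs -big_split; apply: eq_bigr => j _; rewrite coefD scalerDl. Qed.

Lemma HsZ m (h : 'M[CC]_2) (c : CC) (p : {poly CC}) : Hs m h (c *: p) = c *: Hs m h p.
Proof. by rewrite /Hs scaler_sumr; apply: eq_bigr => j _; rewrite coefZ scalerA. Qed.

Lemma Hs_up m (h : 'M[CC]_2) (p : {poly CC}) : (size p <= m.+1)%N -> Hs m.+1 h p = Lf h 1 * Hs m h p.
Proof.
move=> sp; rewrite /Hs big_ord_recr /= nth_default // scale0r addr0 mulr_sumr.

apply: eq_bigr => j _ /=; rewrite -scalerAr; congr (_ *: _).
by rewrite subSn -1?ltnS // exprS mulrCA.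
Qed.

Lemma Hs_X m (h : 'M[CC]_2) (p : {poly CC}) : Hs m.+1 h ('X * p) = Lf h 0 * Hs m h p.
Proof.
rewrite /Hs big_ord_recl /= coefXM /= scale0r add0r mulr_sumr.
apply: eq_bigr => j _; rewrite coefXM /bump /= -scalerAr; congr (_ *: _).
by rewrite add1n subSS exprS mulrA.
Qed.

Lemma mx2E (g h : 'M[CC]_2) i j : (g * h) i j = g i 0 * h 0 j + g i 1 * h 1 j.
Proof. rewrite -mulmxE mxE !big_ord_recl big_ord0 addr0. have -> : lift ord0 ord0 = 1 :> 'I_2 by apply: val_inj. by []. Qed.

Lemma Hs_L m (g h : 'M[CC]_2) r (p : {poly CC}) : (size p <= m.+1)%N ->
  Hs m.+1 h (Lf g r * p) = Lf (g * h) r * Hs m h p.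
Proof.
move=> sp; have -> : Lf g r * p = g r 0 *: ('X * p) + g r 1 *: p.
  by rewrite /Lf mulrDl -scalerAl mul_polyC.
rewrite HsD !HsZ Hs_X Hs_up // /Lf !mx2E.
rewrite -!mul_polyC !polyCD !polyCM; ring.
Qed.

Lemma size_Lf (g : 'M[CC]_2) r : leq (size (Lf g r)) 2.
Proof.
rewrite /Lf (leq_trans (size_polyD _ _)) // geq_max.
by rewrite (leq_trans (size_scale_leq _ _)) ?size_polyX // (leq_trans (size_polyC_leq1 _)).
Qed.

Lemma size_LL (g : 'M[CC]_2) (i j : nat) : leq (size (Lf g 0 ^+ i * Lf g 1 ^+ j)) (i + j).+1.
Proof.
have sM r (q : {poly CC}) k : leq (size q) k.+1 -> leq (size (Lf g r * q)) k.+2.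
  move=> sq; have := size_Lf g r; have := size_polyMleq (Lf g r) q; lia.
elim: i => [|i IH]; first rewrite expr0 mul1r add0n.
  elim: j => [|j IHj]; first by rewrite expr0 size_poly1.
  by rewrite exprS sM.
by rewrite exprS -mulrA sM.
Qed.

Lemma Hs_LL (g h : 'M[CC]_2) i j :
  Hs (i + j) h (Lf g 0 ^+ i * Lf g 1 ^+ j) = Lf (g * h) 0 ^+ i * Lf (g * h) 1 ^+ j.
Proof.
elim: i => [|i IH].
  rewrite !expr0 !mul1r add0n; elim: j => [|j IHj].
    by rewrite /Hs big_ord1 !expr0 coefC eqxx scale1r mulr1.
  by rewrite !exprS Hs_L ?IHj //; have := size_LL g 0 j; rewrite expr0 mul1r.
rewrite !exprS -!mulrA addSn Hs_L ?IH //; exact: size_LL.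
Qed.

Lemma form_actE d (g : 'M[CC]_2) : form_act d g =
  \matrix_(i < d.+1, j < d.+1) (Lf g 0 ^+ i * Lf g 1 ^+ (d - i))`_j.
Proof. by []. Qed.

Lemma form_actM d (g h : 'M[CC]_2) : form_act d (g * h) = form_act d g *m form_act d h.
Proof.
apply/matrixP => i k; rewrite !form_actE !mxE.
have := Hs_LL g h i (d - i); rewrite subnKC ?(ltnSE (ltn_ord i)) // => <-.
by rewrite /Hs coef_sum; apply: eq_bigr => j _; rewrite coefZ !mxE.
Qed.

Lemma form_act1 d : form_act d 1 = 1%:M.
Proof.
apply/matrixP => i j; rewrite !mxE /Lf /= scale1r scale0r add0r addr0 polyC1 expr1n mulr1 coefXn eq_sym.
by [].
Qed.


Definition mx2 (a b c e : CC) : 'M[CC]_2 :=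
  \matrix_(i < 2, j < 2) if (i : nat) == 0%N then (if (j : nat) == 0%N then a else b)
                        else (if (j : nat) == 0%N then c else e).

Lemma mx2M a b c e a' b' c' e' :
  mx2 a b c e * mx2 a' b' c' e' =
  mx2 (a * a' + b * c') (a * b' + b * e') (c * a' + e * c') (c * b' + e * e').
Proof. by apply/matrixP => i j; rewrite !mxE !big_ord_recl big_ord0 addr0 !mxE; case: i => [[|[|]]] //; case: j => [[|[|]]]. Qed.

Lemma mx2_1 : mx2 1 0 0 1 = 1.
Proof. by apply/matrixP => i j; rewrite !mxE; case: i => [[|[|]]] //; case: j => [[|[|]]]. Qed.

Lemma mx2_unit a b c e a' b' c' e' :
  mx2 a b c e * mx2 a' b' c' e' = 1 -> mx2 a b c e \in unitmx.
Proof. by rewrite -mulmxE => /mulmx1_unit []. Qed.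

Definition sig (c : CC) := mx2 1 c 0 1.
Definition rho := mx2 0 1 1 0.
Definition tau (s : CC) := mx2 s 0 0 1.

Lemma sig_unit c : sig c \in unitmx.
Proof. apply: (@mx2_unit _ _ _ _ 1 (- c) 0 1); rewrite mx2M -mx2_1; congr mx2; ring. Qed.

Lemma rho_unit : rho \in unitmx.
Proof. apply: (@mx2_unit _ _ _ _ 0 1 1 0); rewrite mx2M -mx2_1; congr mx2; ring. Qed.

Lemma tau_unit s : s != 0 -> tau s \in unitmx.
Proof.
move=> s0; apply: (@mx2_unit _ _ _ _ s^-1 0 0 1); rewrite mx2M -mx2_1.
by congr mx2; rewrite ?mulfV //; ring.
Qed.

Lemma sig_inv c : sig (- c) * sig c = 1.
Proof. rewrite mx2M -mx2_1; congr mx2; ring. Qed.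

Lemma coef_XDc (c : CC) l j : (('X + c%:P) ^+ l)`_j = 'C(l, j)%:R * c ^+ (l - j).
Proof.
elim: l j => [|l IH] j.
  by rewrite expr0 coefC; case: j => [|j]; rewrite ?mulr1 ?bin0 // bin0n mul0r.
rewrite exprS mulrDl coefD coefXM coefCM.
case: j => [|j] /=; rewrite !IH; first by rewrite !bin0 subn0 exprS !mul1r add0r.
rewrite binS natrD mulrDl addrC; congr (_ + _).
case: (ltnP j l) => hjl; first by rewrite mulrCA -exprS subnSK.
by rewrite bin_small ?ltnS // !mul0r mulr0.
Qed.

Lemma form_act_sig d c (i j : 'I_d.+1) : form_act d (sig c) i j = 'C(i, j)%:R * c ^+ (i - j)%N.
Proof.
rewrite form_actE mxE /Lf /sig !mxE /= scale1r scale0r add0r polyC1 expr1n mulr1.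
exact: coef_XDc.
Qed.

Lemma form_act_rho d (i j : 'I_d.+1) : form_act d rho i j = ((j : nat) == (d - i)%N)%:R.
Proof.
rewrite form_actE mxE /Lf /rho !mxE /= scale1r scale0r add0r addr0 polyC1 expr1n mul1r.
by rewrite coefXn.
Qed.

Lemma form_act_tau d s (i j : 'I_d.+1) : form_act d (tau s) i j = ((i == j)%:R * s ^+ i).
Proof.
rewrite form_actE mxE /Lf /tau !mxE /= scale0r add0r addr0 polyC1 expr1n mulr1.
by rewrite exprZn coefZ coefXn mulrC eq_sym.
Qed.

Lemma form_act_unit d g : g \in unitmx -> form_act d g \in unitmx.
Proof.
move=> gu; have := form_actM d g (invmx g); rewrite -mulmxE mulmxV // form_act1.
by move/esym/mulmx1_unit => [].
Qed.


Lemma nonroot (q : {poly CC}) : q != 0 -> exists u : CC, u != 0 /\ q.[u] != 0.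
Proof.
move=> q0; set rs := [seq (i.+1)%:R : CC | i <- iota 0 (size q)].
have urs : uniq rs.
  by rewrite map_inj_uniq ?iota_uniq // => i j /eqP; rewrite eqr_nat eqSS => /eqP.
have srs : size rs = size q by rewrite size_map size_iota.
case: (boolP (all (root q) rs)) => [allr | ].
  by have := max_poly_roots q0 allr urs; rewrite srs ltnn.
case/allPn => x /mapP [i _ ->] nr; exists (i.+1)%:R; split=> //.
by rewrite pnatr_eq0.
Qed.

Lemma PM m (N : 'M[{poly CC}]_m) :
  \det (map_mx (horner_eval 0) N) != 0 ->
  exists u : CC, u != 0 /\ \det (map_mx (horner_eval u) N) != 0.
Proof.
rewrite det_map_mx => h0.
have : \det N != 0 by apply: contraNneq h0 => ->; rewrite rmorph0.
by case/nonroot => u [u0 hu]; exists u; split=> //; rewrite det_map_mx.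
Qed.

Definition bp (j : nat) : {poly CC} :=
  (j`!%:R)^-1 *: \prod_(k < j) ('X - ((k : nat)%:R)%:P).

Lemma fact_neq0 j : (j`!%:R : CC) != 0.
Proof. by rewrite pnatr_eq0 -lt0n fact_gt0. Qed.

Lemma bp_eval (e j : nat) : (bp j).[e%:R] = 'C(e, j)%:R.
Proof.
rewrite /bp hornerZ horner_prod.
have -> : \prod_(k < j) ('X - ((k : nat)%:R)%:P).[e%:R] = (e ^_ j)%:R :> CC.
  rewrite ffact_prod natr_prod; case: (leqP j e) => hje.
    by apply: eq_bigr => k _; rewrite hornerXsubC natrB // ltnW // (leq_trans (ltn_ord k)).
  rewrite (bigD1 (Ordinal hje)) //= hornerXsubC subrr mul0r.
  by rewrite (bigD1 (Ordinal hje)) //= subnn mul0r.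
by rewrite -bin_ffact natrM mulrC mulrK // unitfE fact_neq0.
Qed.

Lemma size_bp j : size (bp j) = j.+1.
Proof.
rewrite /bp size_scale ?invr_eq0 ?fact_neq0 //.
by rewrite size_prod_XsubC [index_enum _]unlock -enumT size_enum_ord.
Qed.

Lemma coef_bp j : (bp j)`_j = (j`!%:R)^-1.
Proof.
rewrite /bp coefZ.
have mo := monic_prod_XsubC (index_enum 'I_j) xpredT (fun k : 'I_j => (k : nat)%:R : CC).
have hs : size (\prod_(k < j) ('X - ((k : nat)%:R)%:P) : {poly CC}) = j.+1.
  by rewrite size_prod_XsubC [index_enum _]unlock -enumT size_enum_ord.
by move: (monicP mo); rewrite /lead_coef hs /= => ->; rewrite mulr1.
Qed.

Lemma bp_tri m (w : nat -> CC) :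
  \sum_(j < m) w j *: bp j = 0 -> forall j, (j < m)%N -> w j = 0.
Proof.
elim: m => [|m IH] hs j hj //.
have wm : w m = 0.
  have := congr1 (fun p : {poly CC} => p`_m) hs; rewrite coef0 coef_sum big_ord_recr /=.
  rewrite big1 ?add0r => [|k _]; last first.
    by rewrite coefZ nth_default ?mulr0 // size_bp.
  rewrite coefZ coef_bp => /eqP; rewrite mulf_eq0 invr_eq0 (negPf (fact_neq0 m)) orbF.
  by move/eqP.
move: hs; rewrite big_ord_recr /= wm scale0r addr0 => /IH.
case: (ltnP j m) => [hjm /(_ j hjm) //|hmj _].
by have -> : j = m by apply/eqP; rewrite eqn_leq hmj -ltnS hj.
Qed.

Lemma Bdet a (f : 'I_a -> nat) : injective f ->
  \det (\matrix_(i < a, j < a) ('C(f i, j)%:R : CC)) != 0.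
Proof.
move=> finj; rewrite -det_tr; apply/det0P => [[v vn0 hv]].
set p := \sum_(j < a) v 0 j *: bp j.
have proot i : root p (f i)%:R.
  apply/eqP; have := congr1 (fun M : 'M[CC]_(1, a) => M 0 i) hv; rewrite !mxE => <-.
  rewrite /p horner_sum; apply: eq_bigr => j _; rewrite hornerZ bp_eval !mxE.
  by [].
have p0 : p = 0.
  apply/eqP; apply: contraT => pn0.
  set rs := [seq (f i)%:R : CC | i <- enum 'I_a].
  have urs : uniq rs.
    rewrite map_inj_uniq ?enum_uniq // => i j /eqP; rewrite eqr_nat => /eqP.
    exact: finj.
  have ars : all (root p) rs by apply/allP => x /mapP [i _ ->].
  have := max_poly_roots pn0 ars urs; rewrite size_map size_enum_ord.
  have : (size p <= a)%N.
    rewrite /p (leq_trans (size_sum _ _ _)) //; apply/bigmax_leqP => j _.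
    by rewrite (leq_trans (size_scale_leq _ _)) // size_bp.
  by move=> h1 h2; have := leq_trans h2 h1; rewrite ltnn.
set w := fun j : nat => \sum_(k < a | (k : nat) == j) v 0 k.
have wE (k : 'I_a) : w k = v 0 k.
  by rewrite /w (big_pred1 k) // => k'; rewrite /= val_eqE.
have hw : \sum_(j < a) w j *: bp j = 0.
  by rewrite -[RHS]p0 /p; apply: eq_bigr => j _; rewrite wE.
move/negP: vn0; apply; apply/eqP/matrixP => i j.
by rewrite (ord1 i) !mxE -wE (bp_tri hw).
Qed.


Lemma exists_basis a n (V : 'M[CC]_(a, n)) : row_free V ->
  exists f : {ffun 'I_a -> 'I_n}, colsub f V \in unitmx.
Proof.
move=> fV; have rf : row_full V^T by rewrite /row_full mxrank_tr.
exists (fullrankfun rf).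
by rewrite -unitmx_tr trmx_mxsub; apply: fullrowsub_unit.
Qed.

Lemma exchange_unit a n (V : 'M[CC]_(a, n)) (f : 'I_a -> 'I_n) i l :
  colsub f V = 1%:M -> V i l != 0 ->
  colsub (fun k => if k == i then l else f k) V \in unitmx.
Proof.
move=> hf hil; rewrite unitmxE unitfE; apply/negP => /det0P [x xn0 hx].
have hf' r k : V r (f k) = (r == k)%:R.
  by have := congr1 (fun M : 'M[CC]_a => M r k) hf; rewrite !mxE.
have xk k : k != i -> x 0 k = 0.
  move=> ki; have := congr1 (fun M : 'M[CC]_(1, a) => M 0 k) hx.
  rewrite !mxE; under eq_bigr => j _ do rewrite mxE (negPf ki) hf'.
  rewrite (bigD1 k) //= big1 ?addr0 => [|r /negPf rk]; last by rewrite rk mulr0.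
  by rewrite eqxx mulr1.
have xi : x 0 i = 0.
  have := congr1 (fun M : 'M[CC]_(1, a) => M 0 i) hx.
  rewrite !mxE; under eq_bigr => j _ do rewrite mxE eqxx.
  rewrite (bigD1 i) //= big1 ?addr0 => [|r ri]; last by rewrite xk ?mul0r.
  by move/eqP; rewrite mulf_eq0 (negPf hil) orbF => /eqP.
move/negP: xn0; apply; apply/eqP/matrixP => r k; rewrite (ord1 r) !mxE.
by case: (eqVneq k i) => [->|/xk].
Qed.

Definition wt a n (f : {ffun 'I_a -> 'I_n}) : nat := \sum_(k < a) (f k : nat).

Lemma echelon_basis a n (V : 'M[CC]_(a, n)) : row_free V ->
  exists (f : {ffun 'I_a -> 'I_n}), colsub f V \in unitmx /\
    let V' := invmx (colsub f V) *m V in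
    colsub f V' = 1%:M /\ forall i (l : 'I_n), (f i < l)%N -> V' i l = 0.
Proof.
move=> fV; have [f0 hf0] := exists_basis fV.
case: (@arg_maxnP _ f0 (fun f => colsub f V \in unitmx) (@wt a n) hf0) => f hf fmax.
exists f; split=> //=; set V' := invmx (colsub f V) *m V.
have hV' : colsub f V' = 1%:M by rewrite /V' -mulmx_colsub mulVmx.
split=> // i l fil; apply/eqP; apply: contraT => hil.
set f' := [ffun k => if k == i then l else f k].
have uf' : colsub f' V \in unitmx.
  have -> : colsub f' V = colsub f V *m colsub f' V'.
    by rewrite mulmx_colsub /V' mulKVmx.
  rewrite unitmx_mul hf /=.
  have -> : colsub f' V' = colsub (fun k => if k == i then l else f k) V'.
    by apply/matrixP => r k; rewrite !mxE ffunE.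
  exact: exchange_unit.
have wE (g : {ffun 'I_a -> 'I_n}) : wt g = (g i + \sum_(k < a | k != i) (g k : nat))%N.
  by rewrite /wt (bigD1 i).
have := fmax f' uf'; rewrite !wE ffunE eqxx.
have sE : \sum_(k < a | k != i) (f' k : nat) = \sum_(k < a | k != i) (f k : nat).
  by apply: eq_bigr => k /negPf ki; rewrite /f' ffunE ki.
by rewrite sE /geq /= leq_add2r leqNgt fil.
Qed.


Lemma diag_unit n (x : 'rV[CC]_n) : (forall i, x 0 i != 0) -> diag_mx x \in unitmx.
Proof.
move=> hx; rewrite unitmxE unitfE det_diag prodf_seq_neq0.
by apply/allP => i _; apply/implyP => _; exact: hx.
Qed.

Lemma cu_pow (c u : CC) k : c * u = 1 -> c ^+ k * u ^+ k = 1.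
Proof. by move=> h; rewrite -exprMn h expr1n. Qed.

Lemma gen_low d a (V : 'M[CC]_(a, d.+1)) (ha : (a <= d.+1)%N) : row_free V ->
  exists c : CC, colsub (widen_ord ha) (V *m form_act d (sig c)) \in unitmx.
Proof.
move=> fV; have [f [uf []]] := echelon_basis fV.
set V' := invmx (colsub f V) *m V => hV' ech.
have hf' r k : V' r (f k) = (r == k)%:R.
  by have := congr1 (fun M : 'M[CC]_a => M r k) hV'; rewrite !mxE.
have finj : injective (fun i => (f i : nat)).
  move=> i k /= /val_inj fik; have := hf' i k; rewrite -fik hf' eqxx.
  by case: (i =P k) => // _ /eqP; rewrite oner_eq0.
set K : 'M[{poly CC}]_a := \matrix_(i < a, j < a)
  \sum_(l < d.+1) (V' i l * 'C(l, j)%:R) *: 'X^(f i - l).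
have K0 : map_mx (horner_eval 0) K = \matrix_(i < a, j < a) 'C(f i, j)%:R.
  apply/matrixP => i j; rewrite !mxE /horner_eval horner_sum.
  rewrite (bigD1 (f i)) //= big1 ?addr0 => [|l li].
    by rewrite hornerZ hornerXn subnn expr0 mulr1 hf' eqxx mul1r.
  rewrite hornerZ hornerXn; case: (ltngtP (f i) l) => hl.
  - by rewrite ech // !mul0r.
  - by rewrite expr0n subn_eq0 leqNgt hl mulr0.
  - by move: li; rewrite (val_inj hl) eqxx.
have [u [u0 hu]] : exists u : CC, u != 0 /\ \det (map_mx (horner_eval u) K) != 0.
  by apply: PM; rewrite K0; apply: (Bdet finj).
set c := u^-1.
have cu : c * u = 1 by rewrite mulVf.
exists c.
have key : colsub (widen_ord ha) (V' *m form_act d (sig c)) =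
  diag_mx (\row_i c ^+ f i) *m map_mx (horner_eval u) K *m diag_mx (\row_j u ^+ j).
  apply/matrixP => i j; rewrite mul_mx_diag mul_diag_mx !mxE /horner_eval horner_sum.
  rewrite mulr_sumr mulr_suml; apply: eq_bigr => l _.
  rewrite form_act_sig hornerZ hornerXn /=.
  case: (eqVneq (V' i l) 0) => [->|hil]; first by rewrite !mul0r mulr0 mul0r.
  have lfi : (l <= f i)%N by rewrite leqNgt; apply: contra hil => /ech ->.
  case: (ltnP l j) => hlj; first by rewrite bin_small //; ring.
  have -> : c ^+ f i = c ^+ (l - j) * c ^+ (f i - l) * c ^+ j.
    by rewrite -!exprD; congr (_ ^+ _); rewrite addnAC subnK // subnKC.
  set A := c ^+ (l - j); set B := c ^+ (f i - l); set C := c ^+ j.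
  have h1 := cu_pow (f i - l) cu; have h2 := cu_pow j cu.
  rewrite -/B -/C in h1 h2.
  transitivity (V' i l * 'C(l, j)%:R * A * (B * u ^+ (f i - l)) * (C * u ^+ j)).
    by rewrite h1 h2 !mulr1 mulrA.
  ring.
have -> : V = colsub f V *m V' by rewrite /V' mulKVmx.
rewrite -mulmxA -mulmx_colsub key unitmx_mul uf /= !unitmx_mul.
rewrite !diag_unit ?andbT // => i; rewrite mxE expf_neq0 //.
by rewrite invr_eq0.
Qed.


Lemma hi_lt b n (h : (b <= n)%N) (k : 'I_b) : (n - b + k < n)%N.
Proof. have := ltn_ord k; lia. Qed.

Definition hi b n (h : (b <= n)%N) (k : 'I_b) : 'I_n := Ordinal (hi_lt h k).

Lemma tau_diag d s : form_act d (tau s) = diag_mx (\row_j s ^+ j).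
Proof.
apply/matrixP => i j; rewrite form_act_tau !mxE.
by rewrite mulr_natl.
Qed.

Lemma cu_shift (s u : CC) (j a : nat) : s * u = 1 -> (j <= a)%N ->
  s ^+ j = s ^+ a * u ^+ (a - j).
Proof.
move=> su hj; have e : s ^+ a = s ^+ (a - j) * s ^+ j by rewrite -exprD subnK.
by rewrite e mulrAC cu_pow // mul1r.
Qed.

Lemma block_unit m1 m2 (A : 'M[CC]_m1) (B : 'M[CC]_(m1, m2)) (D : 'M[CC]_m2) :
  A \in unitmx -> D \in unitmx -> block_mx A B 0 D \in unitmx.
Proof. by rewrite !unitmxE det_ublock unitrM => -> ->. Qed.

Lemma torus d a b (V : 'M[CC]_(a, d.+1)) (W : 'M[CC]_(b, d.+1))
  (ha : (a <= d.+1)%N) (hb : (b <= d.+1)%N) (hab : (a + b <= d.+1)%N) :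
  colsub (widen_ord ha) V \in unitmx -> colsub (hi hb) W \in unitmx ->
  exists s : CC, s != 0 /\ row_free (col_mx V (W *m form_act d (tau s))).
Proof.
move=> uV uW.
set N : 'M[{poly CC}]_(a + b) := block_mx
  (map_mx polyC (colsub (widen_ord ha) V))
  (\matrix_(i < a, k < b) ((V i (hi hb k))%:P * 'X^(hi hb k - a)))
  (\matrix_(r < b, k < a) ((W r (widen_ord ha k))%:P * 'X^(a - k)))
  (map_mx polyC (colsub (hi hb) W)).
have N0 : map_mx (horner_eval 0) N = block_mx (colsub (widen_ord ha) V)
   (map_mx (horner_eval 0) (\matrix_(i < a, k < b) ((V i (hi hb k))%:P * 'X^(hi hb k - a))))
   0 (colsub (hi hb) W).
  rewrite map_block_mx; congr block_mx.
  - by apply/matrixP => i j; rewrite !mxE /horner_eval hornerC.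
  - apply/matrixP => i j; rewrite !mxE /horner_eval hornerM hornerC hornerXn expr0n.
    by rewrite subn_eq0 leqNgt ltn_ord mulr0.
  - by apply/matrixP => i j; rewrite !mxE /horner_eval hornerC.
have [u [u0 hu]] : exists u : CC, u != 0 /\ \det (map_mx (horner_eval u) N) != 0.
  apply: PM; rewrite N0 -unitfE -unitmxE; exact: block_unit.
set s := u^-1.
have su : s * u = 1 by rewrite mulVf.
have s0 : s != 0 by rewrite invr_eq0.
exists s; split=> //.
set M := col_mx V (W *m form_act d (tau s)).
set Z := block_mx (colsub (widen_ord ha) V) (colsub (hi hb) V)
  (colsub (widen_ord ha) (W *m form_act d (tau s))) (colsub (hi hb) (W *m form_act d (tau s))).
have ZM : Z = M *m row_mx (colsub (widen_ord ha) 1%:M) (colsub (hi hb) 1%:M).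
  by rewrite mul_mx_row /M !mul_col_mx !mulmx_colsub !mulmx1 /Z block_mxEh.
set C := block_mx 1%:M 0 0 (diag_mx (\row_k s ^+ (hi hb k - a))) : 'M[CC]_(a + b).
set R := block_mx 1%:M 0 0 (s ^+ a)%:M : 'M[CC]_(a + b).
have ZE : Z = R *m map_mx (horner_eval u) N *m C.
  rewrite /R /C /N map_block_mx !mulmx_block.
  rewrite !mul1mx !mul0mx !mulmx0 !mulmx1 !addr0 !add0r !mul_scalar_mx.
  rewrite /Z tau_diag; congr block_mx.
  - by apply/matrixP => i j; rewrite !mxE /horner_eval hornerC.
  - apply/matrixP => i j; rewrite mul_mx_diag !mxE /horner_eval hornerM hornerC hornerXn.
    by rewrite -mulrA mulrC cu_pow ?mul1r // mulrC.
  - apply/matrixP => i j; rewrite mul_mx_diag !mxE /horner_eval hornerM hornerC hornerXn.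
    have hj : (j < a)%N := ltn_ord j.
    rewrite (cu_shift su (ltnW hj)).
    by rewrite /=; ring.
  - apply/matrixP => i j; rewrite !mul_mx_diag !mxE /horner_eval hornerC.
    have hj : (a <= hi hb j)%N by rewrite /= ; have := ltn_ord j; lia.
    by rewrite mulrAC -exprD subnKC // mulrC.
have uZ : Z \in unitmx.
  have uN : map_mx (horner_eval u) N \in unitmx by rewrite unitmxE unitfE.
  rewrite ZE !unitmx_mul uN andbT.
  rewrite /R /C !block_unit ?unitmx1 //; first by apply: diag_unit => k; rewrite mxE expf_neq0.
  by rewrite unitmxE det_scalar unitfE !expf_neq0.
rewrite /row_free eqn_leq rank_leq_row /=.
have := mxrankM_maxl M (row_mx (colsub (widen_ord ha) 1%:M) (colsub (hi hb) 1%:M)).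
by rewrite -ZM mxrank_unit.
Qed.


Lemma rho_colsub d m (X : 'M[CC]_(m, d.+1)) : X *m form_act d rho = colsub (@rev_ord _) X.
Proof.
apply/matrixP => r j; rewrite !mxE (bigD1 (rev_ord j)) //= big1 ?addr0 => [|l lj].
  by rewrite form_act_rho /= subSS subKn ?eqxx ?mulr1 // -ltnS.
rewrite form_act_rho; case: eqP => [hj|]; last by rewrite mulr0.
have ljj : l = rev_ord j by apply/val_inj => /=; rewrite hj subSS subKn // -ltnS.
by rewrite ljj eqxx in lj.
Qed.

Lemma colsub_rev_unit m (Y : 'M[CC]_m) : Y \in unitmx -> colsub (@rev_ord _) Y \in unitmx.
Proof.
move=> uY; have -> : colsub (@rev_ord _) Y = Y *m colsub (@rev_ord _) 1%:M by rewrite mulmx_colsub mulmx1.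
rewrite unitmx_mul uY /=.
have : colsub (@rev_ord _) (1%:M : 'M[CC]_m) *m colsub (@rev_ord _) 1%:M = 1%:M.
  rewrite mulmx_colsub mulmx1 -colsub_comp.
  by apply/matrixP => i j; rewrite !mxE /= rev_ordK.
by case/mulmx1_unit.
Qed.

Lemma core d a b (V : 'M[CC]_(a, d.+1)) (W : 'M[CC]_(b, d.+1)) :
  row_free V -> row_free W -> (a + b <= d.+1)%N ->
  exists g, g \in unitmx /\ row_free (col_mx V (W *m form_act d g)).
Proof.
move=> fV fW hab.
have ha : (a <= d.+1)%N by apply: leq_trans hab; apply: leq_addr.
have hb : (b <= d.+1)%N by apply: leq_trans hab; apply: leq_addl.
have [c hc] := gen_low ha fV.
have [e he] := gen_low hb fW.
have hW' : colsub (hi hb) (W *m form_act d (sig e) *m form_act d rho) \in unitmx.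
  rewrite rho_colsub -colsub_comp.
  have -> : colsub (@rev_ord _ \o hi hb) (W *m form_act d (sig e)) =
            colsub (@rev_ord _) (colsub (widen_ord hb) (W *m form_act d (sig e))).
    rewrite -colsub_comp; apply: eq_colsub => k; apply/val_inj => /=.
    have := ltn_ord k; lia.
  exact: colsub_rev_unit.
have [s [s0 hs]] := torus hab hc hW'.
exists (sig e * rho * tau s * sig (- c)); split.
  by rewrite -!mulmxE !unitmx_mul !sig_unit rho_unit tau_unit.
have uc := form_act_unit d (sig_unit c).
have hU : row_free (form_act d (sig c)) by rewrite row_free_unit.
rewrite /row_free -(mxrankMfree _ hU) mul_col_mx -mulmxA -form_actM.
rewrite -mulrA sig_inv mulr1 !form_actM !mulmxA.
exact: hs.
Qed.


End Aux.

Theorem proposition3p1 (d : nat) (V W : 'M[CC]_(d.+1)) :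
  (1 <= d)%N ->
  (0 < \rank V)%N -> (0 < \rank W)%N ->
  exists g : 'M[CC]_2, g \in unitmx /\
    pdim (V :&: (W *m form_act d g))%MS
    = Num.max (-1) (pdim V + pdim W - d%:Z).
Proof.
move=> _ _ _.
set rV := \rank V; set rW := \rank W.
have rVn : (rV <= d.+1)%N by apply: rank_leq_col.
set b := minn rW (d.+1 - rV).
have hbW : (b <= rW)%N by apply: geq_minl.
set Wb := (pid_mx b : 'M[CC]_(b, rW)) *m row_base W.
have fWb : row_free Wb.
  by rewrite /row_free /Wb mxrankMfree ?row_base_free // rank_pid_mx.
have hab : (rV + b <= d.+1)%N by rewrite /b; lia.
have [g [gu hg]] := core (row_base_free V) fWb hab.
exists g; split=> //.
set A := form_act d g.
have fA : row_free A by rewrite row_free_unit form_act_unit.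
have rWA : \rank (W *m A) = rW by rewrite mxrankMfree.
have hsum := mxrank_sum_cap V (W *m A).
have s1 : (rV + b <= \rank (V + W *m A))%N.
  have := hg; rewrite /row_free => /eqP h.
  rewrite -[X in (X <= _)%N]h -(addsmxE _ _).1 mxrankS //.
  apply: addsmxS; first by rewrite eq_row_base.
  by rewrite submxMr // /Wb (submx_trans (submxMl _ _)) // eq_row_base.
have s2 : (\rank (V + W *m A) <= d.+1)%N by apply: rank_leq_col.
rewrite /pdim; move: hsum s1 s2; rewrite rWA -/rV.
move: (\rank (V + _)%MS) (\rank (V :&: _)%MS) => x y.
rewrite /b; move=> h1 h2 h3.
rewrite -/rW. lia.
Qed.
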